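(* In the setting of a generic triple $(F,G,H)$ of decorated flags in an $m$-dimensional space $V$ with volume form $\omega$, for all nonnegative integers $a,b,c$ with $a+b+c=m$ and $(a,b,c)\notin\{(m,0,0),(0,m,0),(0,0,m)\}$, $$\Delta^\ast_{a,b,c}:=\langle\omega^\ast,\ \ast f_{(m-a)}\wedge\ast g_{(m-b)}\wedge\ast h_{(m-c)}\rangle=\Delta^b_{c,0,a}.$$ That is, the coordinate $\Delta_{a,b,c}$ of the dual configuration $(\ast F,\ast G,\ast H)$ equals $\Delta^b_{c,0,a}$.
   Context: $V^\ast$ is the dual space and $\omega^\ast$ the volume form on $V^\ast$ with $\langle\omega^\ast,\omega\rangle=1$, where $\langle\cdot,\cdot\rangle:\wedge^kV\times\wedge^kV^\ast\to\mathbb Q$ is $\langle v_1\wedge\cdots\wedge v_k,\phi_1\wedge\cdots\wedge\phi_k\rangle=\det(\langle v_i,\phi_j\rangle)$. The isomorphism $\ast:\wedge^kV\to\wedge^{m-k}V^\ast$ is defined by $\langle v,\ast u\rangle=\langle u\wedge v,\omega\rangle$ for $v\in\wedge^{m-k}V$. A decorated flag is $F_1\subset\cdots\subset F_{m-1}$ with nonzero $f_{(i)}\in\wedge^iF_i$; $f_{(0)}=1$, $f_{(m)}$ normalized by $\langle f_{(m)},\omega\rangle=1$; its dual $\ast F$ is the flag $F_{m-1}^\perp\subset\cdots\subset F_1^\perp$ in $V^\ast$ with decorations $\ast f_{(m-k)}$. For generic $(F,G)$ there is a basis $f_1,\dots,f_m$ with $f_k\in F_k\cap G_{m+1-k}$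 and $f_{(k)}=f_1\wedge\cdots\wedge f_k$; for generic $(G,H)$ a basis $h_1,\dots,h_m$ with $h_k\in G_{m+1-k}\cap H_k$ and $h_{(k)}=h_k\wedge\cdots\wedge h_1$. Put $f_{s,(k)}=f_{s+1}\wedge\cdots\wedge f_{s+k}$, $h_{(k),s}=h_{s+k}\wedge\cdots\wedge h_{s+1}$, and for $a'+b'+c'=m-s$ define $\Delta^s_{a',b',c'}:=\langle f_{s,(a')}\wedge g_{(b')}\wedge h_{(c'),s},\omega_s\rangle$ where $\omega_s$ is the volume form on $G_{m-s}$ with $\langle g_{(m-s)},\omega_s\rangle=\langle f_{(s)}\wedge g_{(m-s)},\omega\rangle\langle g_{(m-s)}\wedge h_{(s)},\omega\rangle$. *)

(* Defs.v *)
(* Linear algebra over the rationals Q (as in the paper's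
   pairing  /\^k V x /\^k V^* -> Q).  V = Q^m (row vectors), with the standard
   volume form omega = e^1 /\ ... /\ e^m; every (V, omega) is isomorphic to this. *)
From HB Require Import structures.
From mathcomp Require Import all_boot all_order all_algebra.
Set Implicit Arguments. Unset Strict Implicit. Unset Printing Implicit Defensive.
Import Order.TTheory GRing.Theory Num.Theory.
Local Open Scope ring_scope.

(* A multivector is given by its coordinates on the basis e_S = e_{s1} /\ ... /\ e_{sk},
   s1 < ... < sk.  The same type is used for /\V^* with the dual basis e^S. *)
Definition mv (m : nat) := {ffun {set 'I_m} -> rat}.

(* e_A /\ e_B = shuffle_sign A B * e_(A :|: B) for disjoint A, B *)
Definition shuffle_sign m (A B : {set 'I_m}) : rat :=
  (-1) ^+ #|[set p : 'I_m * 'I_m | [&& p.1 \in A, p.2 \in B & (p.2 < p.1)%N]]|.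

Definition wedge m (u v : mv m) : mv m :=
  [ffun S : {set 'I_m} => \sum_(A : {set 'I_m} | A \subset S)
                shuffle_sign A (S :\: A) * u A * v (S :\: A)].

Definition mv1 m : mv m := [ffun S : {set 'I_m} => (S == set0)%:R].

Definition mvec m (v : 'rV[rat]_m) : mv m :=
  [ffun S : {set 'I_m} => \sum_(i : 'I_m | S == [set i]) v 0 i].

Definition wedge_seq m (s : seq 'rV[rat]_m) : mv m :=
  foldr (fun v acc => wedge (mvec v) acc) (mv1 m) s.

Definition wedge_rows m k (M : 'M[rat]_(k, m)) : mv m :=
  wedge_seq [seq row i M | i <- enum 'I_k].

(* <u, phi> for u in /\V, phi in /\V^*: on homogeneous elements of the same
   degree k this is <v1../\vk, phi1/\../\phik> = det(<vi,phij>) (Cauchy-Binet). *)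
Definition pairing m (u phi : mv m) : rat := \sum_(S : {set 'I_m}) u S * phi S.

Definition basis_mv m (S : {set 'I_m}) : mv m := [ffun T : {set 'I_m} => (T == S)%:R].

Definition omega m : mv m := basis_mv [set: 'I_m].
Definition omega_star m : mv m := basis_mv [set: 'I_m].

(* Hodge-type star: <v, *u> = <u /\ v, omega> for all v, i.e. on the basis the
   coordinate of star u at S is <u /\ e_S, omega>. *)
Definition hodge m (u : mv m) : mv m :=
  [ffun S : {set 'I_m} => pairing (wedge u (basis_mv S)) (omega m)].

(* A decorated flag is a family D k : 'M_(k,m), k = 0..m:  F_k = row space of D k,
   decoration f_(k) = wedge of the rows of D k. *)
Definition decorated_flag m (D : forall k : nat, 'M[rat]_(k, m)) : Prop :=
  [/\ forall k, (0 < k < m)%N -> \rank (D k) = k,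
      forall k, (k < m)%N -> (D k <= D k.+1)%MS
    & pairing (wedge_rows (D m)) (omega m) = 1].

Definition dec m (D : forall k : nat, 'M[rat]_(k, m)) (k : nat) : mv m :=
  wedge_rows (D k).

Definition generic_triple m (F G H : forall k : nat, 'M[rat]_(k, m)) : Prop :=
  forall a b c, (a + b + c)%N = m ->
    \rank (col_mx (F a) (col_mx (G b) (H c))) = m.

Definition FG_basis m (F G : forall k : nat, 'M[rat]_(k, m)) (fv : nat -> 'rV[rat]_m) :=
  forall k, (1 <= k <= m)%N ->
    [/\ (fv k <= F k)%MS, (fv k <= G (m.+1 - k)%N)%MS
      & wedge_seq [seq fv i | i <- iota 1 k] = dec F k].

Definition GH_basis m (G H : forall k : nat, 'M[rat]_(k, m)) (hv : nat -> 'rV[rat]_m) :=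
  forall k, (1 <= k <= m)%N ->
    [/\ (hv k <= G (m.+1 - k)%N)%MS, (hv k <= H k)%MS
      & wedge_seq (rev [seq hv i | i <- iota 1 k]) = dec H k].

Definition f_s m (fv : nat -> 'rV[rat]_m) (s k : nat) : mv m :=
  wedge_seq [seq fv i | i <- iota s.+1 k].

Definition h_s m (hv : nat -> 'rV[rat]_m) (s k : nat) : mv m :=
  wedge_seq (rev [seq hv i | i <- iota s.+1 k]).

(* Evaluation <X, w> of the volume form w on the subspace W with top multivector
   g (g spans /\^top W) determined by <g, w> = N.  For X in /\^top W we have
   X = lambda g, and lambda is recovered as the coordinate ratio
   (sum_S X_S g_S) / (sum_S g_S^2); then <X, w> = lambda * N. *)
Definition vol_eval m (g : mv m) (N : rat) (X : mv m) : rat :=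
  N * (\sum_(S : {set 'I_m}) X S * g S / \sum_(S : {set 'I_m}) g S ^+ 2).

(* Delta^s_{a',b',c'} = <f_{s,(a')} /\ g_(b') /\ h_{(c'),s}, omega_s>, where
   omega_s is the volume form on G_(m-s) with
   <g_(m-s), omega_s> = <f_(s) /\ g_(m-s), omega> <g_(m-s) /\ h_(s), omega>. *)
Definition Delta_s m (F G H : forall k : nat, 'M[rat]_(k, m))
    (fv hv : nat -> 'rV[rat]_m) (s a' b' c' : nat) : rat :=
  let g := dec G (m - s)%N in
  let N := pairing (wedge (dec F s) g) (omega m) *
           pairing (wedge g (dec H s)) (omega m) in
  vol_eval g N (wedge (f_s fv s a') (wedge (dec G b') (h_s hv s c'))).

Definition Delta_star m (F G H : forall k : nat, 'M[rat]_(k, m)) (a b c : nat) : rat :=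
  pairing (omega_star m)
    (wedge (hodge (dec F (m - a)%N)) (wedge (hodge (dec G (m - b)%N)) (hodge (dec H (m - c)%N)))).

(* Main.v *)
Require Import Defs.
From HB Require Import structures.
From mathcomp Require Import all_boot all_order all_algebra.
From mathcomp Require Import ring lra zify.
Set Implicit Arguments. Unset Strict Implicit. Unset Printing Implicit Defensive.
Import Order.TTheory GRing.Theory Num.Theory.
Local Open Scope ring_scope.


Lemma disjointP (T : finType) (A B : {set T}) :
  reflect (forall x, x \in A -> x \in B -> False) [disjoint A & B].
Proof.
rewrite disjoint_subset; apply: (iffP subsetP) => h x xA.
  by move=> xB; have := h x xA; rewrite inE xB.
by rewrite inE; apply/negP => xB; apply: (h x xA xB).
Qed.

Lemma setDUK (T : finType) (A B : {set T}) : B \subset A -> B :|: (A :\: B) = A.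
Proof.
move=> BA; apply/setP => x; rewrite !inE; case hx: (x \in B) => //=.
by rewrite (subsetP BA x hx).
Qed.

Section Alg.
Variable m : nat.
Implicit Types (A B C D S : {set 'I_m}) (u v w : mv m).

Definition invc A B := #|[set p : 'I_m * 'I_m | [&& p.1 \in A, p.2 \in B & (p.2 < p.1)%N]]|.

Lemma ssE A B : shuffle_sign A B = (-1) ^+ invc A B.
Proof. by []. Qed.

Lemma invcU_l B C D : [disjoint B & C] -> invc (B :|: C) D = (invc B D + invc C D)%N.
Proof.
move=> dBC; rewrite /invc.
set X := [set p | _]; set Y := [set p | _]; set Z := [set p | _].
have -> : X = Y :|: Z.
  by apply/setP => p; rewrite !inE; case: (p.1 \in B); case: (p.1 \in C); case: (p.2 \in D); case: (p.2 < p.1)%N.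
rewrite cardsU (_ : Y :&: Z = set0) ?cards0 ?subn0 //.
apply/setP => p; rewrite !inE.
case hB: (p.1 \in B) => //=; case hC: (p.1 \in C) => //=; rewrite ?andbF //.
by move/disjointP: dBC => /(_ _ hB hC).
Qed.

Lemma invcU_r B C D : [disjoint C & D] -> invc B (C :|: D) = (invc B C + invc B D)%N.
Proof.
move=> dCD; rewrite /invc.
set X := [set p | _]; set Y := [set p | _]; set Z := [set p | _].
have -> : X = Y :|: Z.
  by apply/setP => p; rewrite !inE; case: (p.1 \in B); case: (p.2 \in C); case: (p.2 \in D); case: (p.2 < p.1)%N.
rewrite cardsU (_ : Y :&: Z = set0) ?cards0 ?subn0 //.
apply/setP => p; rewrite !inE.
case hB: (p.2 \in C) => //=; case hC: (p.2 \in D) => //=; rewrite ?andbF //.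
by move/disjointP: dCD => /(_ _ hB hC).
Qed.

Lemma wedgeE u v S : wedge u v S =
  \sum_(A : {set 'I_m} | A \subset S) shuffle_sign A (S :\: A) * u A * v (S :\: A).
Proof. by rewrite ffunE. Qed.

Lemma reindexU (F : {set 'I_m} -> rat) B S : B \subset S ->
  \sum_(A : {set 'I_m} | (A \subset S) && (B \subset A)) F A = \sum_(C : {set 'I_m} | C \subset S :\: B) F (B :|: C).
Proof.
move=> BS.
rewrite (reindex_onto (fun C => B :|: C) (fun A => A :\: B)); last first.
  by move=> A /andP[_ BA]; rewrite setDUK.
apply: eq_bigl => C; rewrite subsetUl andbT subUset BS /= subsetD.
rewrite setDUl setDv set0U.
apply/idP/idP.
  move=> /andP[CS /eqP e]; rewrite CS /=; rewrite -e; apply/disjointP => x; rewrite !inE; by case/andP => /negbTE ->.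
move=> /andP[CS dCB]; rewrite CS /=; apply/eqP/setP => x; rewrite !inE.
case hx: (x \in C); rewrite ?andbF ?andbT //.
by apply/negP => xB; move/disjointP: dCB => /(_ _ hx xB).
Qed.

Lemma wedgeA u v w : wedge (wedge u v) w = wedge u (wedge v w).
Proof.
apply/ffunP => S; rewrite !wedgeE.
under eq_bigr => A _ do rewrite wedgeE big_distrr big_distrl /=.
rewrite (exchange_big_dep (fun B => B \subset S)) /=; last first.
  by move=> A B AS BA; apply: subset_trans BA AS.
apply: eq_bigr => B BS.
rewrite reindexU // wedgeE big_distrr /=.
apply: eq_bigr => C CSB.
have dBC : [disjoint B & C].
  by apply/disjointP => x xB xC; move/subsetP: CSB => /(_ _ xC); rewrite inE xB.
have e1 : (B :|: C) :\: B = C.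
  apply/setP => x; rewrite !inE; case hx: (x \in B); rewrite ?orbF //=.
  by apply/esym/negbTE/negP => xC; move/disjointP: dBC => /(_ _ hx xC).
have e2 : S :\: (B :|: C) = (S :\: B) :\: C.
  by apply/setP => x; rewrite !inE; case: (x \in B); case: (x \in C); case: (x \in S).
rewrite e1 e2.
set D := (S :\: B) :\: C.
have eSB : S :\: B = C :|: D by rewrite /D setDUK.
have dCD : [disjoint C & D] by apply/disjointP => x xC; rewrite !inE xC.
have dBD : [disjoint B & D] by apply/disjointP => x xB; rewrite !inE xB andbF.
rewrite eSB !ssE invcU_l // invcU_r // !exprD.

ring.
Qed.

Lemma wedge1v v : wedge (mv1 m) v = v.
Proof.
apply/ffunP => S; rewrite wedgeE (bigD1 set0) ?sub0set //= big1 ?addr0.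
  by rewrite ffunE eqxx setD0 ssE /invc (_ : [set p | _] = set0) ?cards0 ?expr0 ?mul1r //; apply/setP => p; rewrite !inE.
by move=> A /andP[_ hA]; rewrite ffunE (negbTE hA) mulr0 mul0r.
Qed.

Lemma wedgev1 v : wedge v (mv1 m) = v.
Proof.
apply/ffunP => S; rewrite wedgeE (bigD1 S) ?subxx //= big1 ?addr0.
  rewrite setDv ffunE eqxx ssE /invc (_ : [set p | _] = set0) ?cards0 ?expr0 ?mul1r ?mulr1 //.
  by apply/setP => p; rewrite !inE andbCA.
move=> A /andP[AS hA]; rewrite ffunE (_ : (S :\: A == set0) = false) ?mulr0 //.
apply/negbTE; apply: contra hA => /eqP e; apply/eqP/setP => x.
apply/idP/idP => [/(subsetP AS)//| xS]. apply/negPn/negP => xA.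
have : x \in S :\: A by rewrite inE xA xS.
by rewrite e inE.
Qed.

Definition sc (c : rat) u : mv m := [ffun S => c * u S].

Lemma wedgeZl c u v : wedge (sc c u) v = sc c (wedge u v).
Proof.
apply/ffunP => S; rewrite !ffunE big_distrr /=; apply: eq_bigr => A _; rewrite ffunE; ring.
Qed.

Lemma wedgeZr c u v : wedge u (sc c v) = sc c (wedge u v).
Proof.
apply/ffunP => S; rewrite !ffunE big_distrr /=; apply: eq_bigr => A _; rewrite ffunE; ring.
Qed.

Lemma scA c d u : sc c (sc d u) = sc (c * d) u.
Proof. by apply/ffunP => S; rewrite !ffunE mulrA. Qed.

Lemma wedge_seq_cat (s t : seq 'rV[rat]_m) : wedge_seq (s ++ t) = wedge (wedge_seq s) (wedge_seq t).
Proof.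
elim: s => [|x s IH] /=; first by rewrite wedge1v.
by rewrite IH wedgeA.
Qed.

End Alg.


Section Minor.
Variable m : nat.
Implicit Types (A B C D S : {set 'I_m}) (u v w : mv m).

Lemma pair_inj (T U : Type) (x : T) : injective (@pair T U x).
Proof. by move=> y1 y2 [].
Qed.

Definition rk S (x : 'I_m) : nat := #|[set p in S | (p < x)%N]|.

Lemma invc1 S x : invc [set x] (S :\ x) = rk S x.
Proof.
rewrite /invc /rk.
rewrite (_ : [set p | _] = (pair x) @: [set p in S | (p < x)%N]).
  by rewrite card_imset // => y1 y2 [].
apply/setP => -[p1 p2]; rewrite !inE /=.
case: (eqVneq p1 x) => [->|ne].
  rewrite (mem_imset _ _ (@pair_inj _ _ x)).
  by rewrite !inE; case: (eqVneq p2 x) => [->|_]; rewrite ?ltnn ?andbF //=.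
apply/esym/negbTE/negP => /imsetP[y _ [e _]]; by rewrite e eqxx in ne.
Qed.

Lemma mvecE (v : 'rV[rat]_m) A : mvec v A = \sum_(i : 'I_m | A == [set i]) v 0 i.
Proof. by rewrite ffunE. Qed.

Lemma wedge_mvec (v : 'rV[rat]_m) W S :
  wedge (mvec v) W S = \sum_(x in S) (-1) ^+ (rk S x) * v 0 x * W (S :\ x).
Proof.
rewrite wedgeE.
under eq_bigr => A _ do rewrite mvecE big_distrr big_distrl /=.
rewrite (exchange_big_dep (mem S)) /=; last by move=> A j AS /eqP e; move: AS; rewrite e sub1set.
apply: eq_bigr => x xS.
rewrite (big_pred1 [set x]); last first.
  by move=> A; rewrite /= andbC; case: (eqVneq A [set x]) => [->|]; rewrite ?sub1set ?xS.
by rewrite ssE invc1.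
Qed.

Definition sub k (M : 'M[rat]_(k, m)) S : 'M[rat]_k :=
  \matrix_(i, j) \sum_(x in S | rk S x == j) M i x.

Lemma rk_lt S x : x \in S -> (rk S x < #|S|)%N.
Proof.
move=> xS; apply: proper_card; rewrite properE; apply/andP; split.
  by apply/subsetP => p; rewrite inE => /andP[].
by apply/subsetPn; exists x => //; rewrite inE ltnn andbF.
Qed.

Lemma rkD1 S x y : y \in S -> y != x ->
  rk S y = (rk (S :\ x) y + ((x \in S) && (x < y)%N))%N.
Proof.
move=> yS nyx; rewrite /rk (cardsD1 x [set p in S | (p < y)%N]) addnC; congr (_ + _)%N.
  by apply: eq_card => p; rewrite !inE andbA.
by rewrite inE.
Qed.

Lemma rk_le S x (y : 'I_m) : x \in S -> (x < y)%N -> (rk S x <= rk (S :\ x) y)%N.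
Proof.
move=> xS xy; apply: subset_leq_card; apply/subsetP => p; rewrite !inE => /andP[pS px].
rewrite pS (ltn_trans px xy) !andbT; apply/eqP => e; by rewrite e ltnn in px.
Qed.

Lemma rk_gt S (x y : 'I_m) : y \in S -> (y < x)%N -> (rk (S :\ x) y < rk S x)%N.
Proof.
move=> yS yx; apply: proper_card; rewrite properE; apply/andP; split.
  apply/subsetP => p; rewrite !inE => /andP[/andP[_ pS] py]; by rewrite pS (ltn_trans py yx).
apply/subsetPn; exists y; first by rewrite inE yS yx.
by rewrite !inE ltnn !andbF.
Qed.

Lemma wedge_rowsS k (M : 'M[rat]_(k.+1, m)) :
  wedge_rows M = wedge (mvec (row 0 M)) (wedge_rows (row' 0 M)).
Proof.
rewrite /wedge_rows enum_ordSl /= -map_comp; congr (wedge _ (wedge_seq _)).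
by apply: eq_map => i /=; apply/rowP => j; rewrite !mxE.
Qed.

Lemma wedge_rows0 (M : 'M[rat]_(0, m)) : wedge_rows M = mv1 m.
Proof. by rewrite /wedge_rows enum_ord0. Qed.

Lemma MF k (M : 'M[rat]_(k, m)) S :
  wedge_rows M S = if #|S| == k then \det (sub M S) else 0.
Proof.
elim: k M S => [|k IH] M S.
  rewrite wedge_rows0 ffunE det_mx00 cards_eq0; by case: (S == set0).
rewrite wedge_rowsS wedge_mvec.
under eq_bigr => x xS do rewrite IH.
case: (eqVneq #|S| k.+1) => hS; last first.
  apply: big1 => x xS; rewrite (_ : (#|S :\ x| == k) = false) ?mulr0 //.
  apply/negbTE; apply: contra hS => /eqP h; by rewrite (cardsD1 x) xS h.
rewrite (eq_bigr (fun x => (-1) ^+ rk S x * M 0 x * \det (sub (row' 0 M) (S :\ x)))); last first.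
  move=> x xS; rewrite mxE (_ : (#|S :\ x| == k) = true) //.
  by apply/eqP; move: hS; rewrite (cardsD1 x) xS => -[].
rewrite (expand_det_row _ 0).
under [RHS]eq_bigr => j _ do rewrite mxE big_distrl /=.
rewrite (exchange_big_dep (mem S)) /=; last by move=> j x _ /andP[].
apply: eq_bigr => x xS.
have rlt : (rk S x < k.+1)%N by rewrite -hS rk_lt.
rewrite (big_pred1 (inord (rk S x))); last first.
  move=> j /=; rewrite xS /=; apply/eqP/eqP => [e|->]; last by rewrite inordK.
  by apply: val_inj; rewrite /= inordK.
rewrite /cofactor inordK // add0n.
rewrite mulrA [M 0 x * _]mulrC; congr (_ * _).
congr (\det _); apply/matrixP => i j; rewrite !mxE.
rewrite [LHS](eq_bigr (fun y => M (lift 0 i) y)); last by move=> y _; rewrite mxE.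
apply/esym; apply: eq_bigl => y; rewrite !inE /= /bump inordK //.
case: (eqVneq y x) => [->|nyx] /=.
  rewrite xS /=; move: (rk S x) (nat_of_ord j) => a b; apply/negbTE/eqP.
  by case: (leqP a b) => h /=; lia.
case yS: (y \in S) => //=.
rewrite (rkD1 yS nyx) xS /=.
case: (ltngtP x y) => [xy|yx|e]; last by move/val_inj: e => e; rewrite e eqxx in nyx.
  have := rk_le xS xy; move: (rk (S :\ x) y) (rk S x) (nat_of_ord j) => a b c h.
  by case: (leqP b c) => h2 /=; apply/eqP/eqP; lia.
have := rk_gt yS yx; move: (rk (S :\ x) y) (rk S x) (nat_of_ord j) => a b c h.
by case: (leqP b c) => h2 /=; apply/eqP/eqP; lia.
Qed.

End Minor.


Lemma cardlt p n : (n <= p)%N -> #|[set i : 'I_p | (i < n)%N]| = n.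
Proof.
elim: n => [|n IH] np.
  by apply/eqP; rewrite cards_eq0; apply/eqP/setP => i; rewrite !inE.
have np' : (n < p)%N by [].
rewrite (cardsD1 (Ordinal np')) inE /= ltnSn add1n.
have -> : #|[set i : 'I_p | (i < n.+1)%N] :\ Ordinal np'| = #|[set i : 'I_p | (i < n)%N]|.
  apply: eq_card => i; rewrite !inE ltnS.
  by rewrite -val_eqE /= ltn_neqAle andbC.
by rewrite IH // ltnW.
Qed.

Section C.
Variable m : nat.
Implicit Types (A B C D S T : {set 'I_m}) (u v w : mv m).

Lemma rk_mono S (x y : 'I_m) : x \in S -> (x < y)%N -> (rk S x < rk S y)%N.
Proof.
move=> xS xy; apply: proper_card; rewrite properE; apply/andP; split.
  apply/subsetP => p; rewrite !inE => /andP[pS px]; by rewrite pS (ltn_trans px xy).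
apply/subsetPn; exists x; first by rewrite inE xS xy.
by rewrite !inE ltnn andbF.
Qed.

Lemma rk_inj S (x y : 'I_m) : x \in S -> y \in S -> rk S x = rk S y -> x = y.
Proof.
move=> xS yS e; case: (ltngtP x y) => [h|h|h]; last exact: val_inj.
  by have := rk_mono xS h; rewrite e ltnn.
by have := rk_mono yS h; rewrite e ltnn.
Qed.

Lemma rk_setT (x : 'I_m) : rk [set: 'I_m] x = x.
Proof.
rewrite /rk -{2}(@cardlt m x (ltnW (ltn_ord x))); apply: eq_card => p; by rewrite !inE.
Qed.

Lemma rk_surj S (j : nat) : (j < #|S|)%N -> exists2 x, x \in S & rk S x = j.
Proof.
move=> jS.
have Sm : (#|S| <= m)%N by apply: leq_trans (max_card _) _; rewrite card_ord.
pose g (x : 'I_m) : 'I_m.+1 := inord (rk S x).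
have rkm x : x \in S -> (rk S x < m.+1)%N.
  by move=> xS; apply: leq_trans (rk_lt xS) _; apply: leq_trans Sm _.
have ginj : {in S &, injective g}.
  move=> x y xS yS /(congr1 val); rewrite /g /= !inordK ?rkm //; exact: rk_inj.
have sub1 : g @: S \subset [set i : 'I_m.+1 | (i < #|S|)%N].
  apply/subsetP => i /imsetP[x xS ->]; by rewrite inE /g inordK ?rkm // rk_lt.
have ceq : #|g @: S| = #|[set i : 'I_m.+1 | (i < #|S|)%N]|.
  by rewrite card_in_imset // cardlt // ltnW.
have jin : (Ordinal (leq_trans jS (leq_trans Sm (leqnSn m)))) \in [set i : 'I_m.+1 | (i < #|S|)%N] by rewrite inE.
move: (subset_cardP ceq sub1) => /(_ (Ordinal (leq_trans jS (leq_trans Sm (leqnSn m))))).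
rewrite jin => /imsetP[x xS /(congr1 val)]; rewrite /g /= inordK ?rkm // => e.
by exists x.
Qed.

Definition mxn n (s : seq 'rV[rat]_m) : 'M[rat]_(n, m) := \matrix_(i < n, j < m) (nth 0 s i) 0 j.

Lemma wedge_rows_mxn n s : size s = n -> wedge_rows (mxn n s) = wedge_seq s.
Proof.
move=> <-; rewrite /wedge_rows; congr wedge_seq.
transitivity [seq nth 0 s i | i <- iota 0 (size s)]; last by rewrite map_nth_iota0 // take_size.
rewrite -val_enum_ord -map_comp.
by apply: eq_map => i /=; apply/rowP => j; rewrite !mxE.
Qed.

Lemma top_det (M : 'M[rat]_m) : wedge_rows M setT = \det M.
Proof.
rewrite MF cardsT card_ord eqxx; congr (\det _); apply/matrixP => i j; rewrite mxE.
rewrite (big_pred1 j) // => x; rewrite inE rk_setT; exact: val_eqE.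
Qed.

Lemma sub_mul k (Cm : 'M[rat]_k) (W : 'M[rat]_(k, m)) S : sub (Cm *m W) S = Cm *m sub W S.
Proof.
apply/matrixP => i j; rewrite !mxE.
under eq_bigr => x _ do rewrite mxE.
rewrite exchange_big /=; apply: eq_bigr => l _; rewrite mxE big_distrr /=.
by apply: eq_bigr.
Qed.

Lemma ML k (Cm : 'M[rat]_k) (W : 'M[rat]_(k, m)) :
  wedge_rows (Cm *m W) = sc (\det Cm) (wedge_rows W).
Proof.
apply/ffunP => S; rewrite ffunE !MF sub_mul det_mulmx.
by case: (#|S| == k); rewrite ?mulr0.
Qed.

Definition Emx S : 'M[rat]_(#|S|, m) := \matrix_(i, x) ((x \in S) && (rk S x == i))%:R.

Lemma det_zero_col n (M : 'M[rat]_n) j : (forall i, M i j = 0) -> \det M = 0.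
Proof.
move=> h; rewrite -det_tr (expand_det_row _ j) big1 // => i _; by rewrite mxE h mul0r.
Qed.

Lemma wedge_Emx S : wedge_rows (Emx S) = basis_mv S.
Proof.
apply/ffunP => T; rewrite MF ffunE.
case: (eqVneq T S) => [->|nTS].
  rewrite eqxx.
  rewrite (_ : sub (Emx S) S = 1%:M) ?det1 //.
  apply/matrixP => i j; rewrite !mxE.
  have [x xS rx] := rk_surj (ltn_ord j).
  rewrite (bigD1 x) /=; last by rewrite xS rx eqxx.
  rewrite big1 ?addr0.
    by rewrite mxE xS rx /= eq_sym.
  move=> y /andP[/andP[yS ry] nyx]; rewrite mxE yS /=.
  by case/negP: nyx; apply/eqP; apply: rk_inj yS xS _; rewrite rx; exact/eqP.
case: (eqVneq #|T| #|S|) => hT //=.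
have nTsub : ~~ (T \subset S).
  apply: contra nTS => TS; apply/eqP/setP; exact/(subset_cardP hT).
case/subsetPn: nTsub => t tT tS.
have rt : (rk T t < #|S|)%N by rewrite -hT rk_lt.
apply: (det_zero_col (j := Ordinal rt)) => i; rewrite mxE.
apply: big1 => x /andP[xT /eqP rx]; rewrite mxE.
have -> : x = t by apply: rk_inj xT tT _.
by rewrite (negbTE tS).
Qed.

End C.


Section D.
Variable m : nat.
Implicit Types (A B C D S T : {set 'I_m}) (u v w x : mv m).

Lemma pairing_basisr u S : pairing u (basis_mv S) = u S.
Proof.
rewrite /pairing (bigD1 S) //= big1 ?addr0; first by rewrite ffunE eqxx mulr1.
by move=> T /negbTE h; rewrite ffunE h mulr0.
Qed.

Lemma pairing_basisl u S : pairing (basis_mv S) u = u S.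
Proof.
rewrite /pairing (bigD1 S) //= big1 ?addr0; first by rewrite ffunE eqxx mul1r.
by move=> T /negbTE h; rewrite ffunE h mul0r.
Qed.

Lemma top_wedge w x : wedge w x setT =
  \sum_(A : {set 'I_m}) shuffle_sign A (~: A) * w A * x (~: A).
Proof. by rewrite wedgeE; apply: eq_big => [A|A _]; rewrite ?subsetT ?setTD. Qed.

Lemma HE w S : wedge w (basis_mv S) setT = shuffle_sign (~: S) S * w (~: S).
Proof.
rewrite top_wedge (bigD1 (~: S)) //= big1 ?addr0.
  by rewrite setCK ffunE eqxx mulr1.
move=> A hA; rewrite ffunE (_ : (~: A == S) = false) ?mulr0 //.
apply/negbTE; apply: contra hA => /eqP <-; by rewrite setCK.
Qed.

Lemma hodgeE w S : hodge w S = shuffle_sign (~: S) S * w (~: S).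
Proof. by rewrite ffunE /omega pairing_basisr HE. Qed.

Lemma sign_sq (n : nat) : ((-1) ^+ n * (-1) ^+ n : rat) = 1.
Proof. by rewrite -expr2 -exprM mulnC exprM (_ : (-1) ^+ 2 = 1 :> rat) ?expr1n // expr2 mulrNN mulr1. Qed.

Lemma top_wedge_hodge w x : wedge w (hodge x) setT = pairing w x.
Proof.
rewrite top_wedge /pairing; apply: eq_bigr => A _; rewrite hodgeE setCK !ssE.
rewrite (_ : forall a b c : rat, a * b * (a * c) = (a * a) * (b * c)); last by move=> *; ring.
by rewrite sign_sq mul1r.
Qed.

Lemma pairing_hodge w x : pairing (hodge w) x = wedge w x setT.
Proof.
rewrite top_wedge /pairing (reindex_inj (@setC_inj _)) /=.
by apply: eq_bigr => A _; rewrite hodgeE setCK.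
Qed.

Lemma hodgeZ c w : hodge (sc c w) = sc c (hodge w).
Proof. by apply/ffunP => S; rewrite [RHS]ffunE !hodgeE ffunE; ring. Qed.

Definition erows S : seq 'rV[rat]_m :=
  [seq \row_(x < m) ((x \in S) && (rk S x == i))%:R | i <- iota 0 #|S|].

Lemma size_erows S : size (erows S) = #|S|.
Proof. by rewrite size_map size_iota. Qed.

Lemma nth_erows S i (x : 'I_m) : (i < #|S|)%N ->
  (nth 0 (erows S) i) 0 x = ((x \in S) && (rk S x == i))%:R.
Proof. by move=> hi; rewrite (nth_map 0%N) ?size_iota // nth_iota // mxE. Qed.

Lemma basis_seq S : wedge_seq (erows S) = basis_mv S.
Proof.
rewrite -(wedge_rows_mxn (size_erows S)) -wedge_Emx; congr wedge_rows.
by apply/matrixP => i x; rewrite !mxE nth_erows.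
Qed.

End D.

Lemma mxn_cat m k l (s t : seq 'rV[rat]_m) : size s = k -> size t = l ->
  mxn (k + l) (s ++ t) = col_mx (mxn k s) (mxn l t).
Proof.
move=> hs ht; apply/matrixP => i j; rewrite !mxE.
case: splitP => [i' e|i' e]; rewrite !mxE e nth_cat hs.
  by rewrite ltn_ord.
by rewrite ltnNge leq_addr /= addKn.
Qed.

Lemma HL m k l (e : (k + l)%N = m) (ps qs : seq 'rV[rat]_m) :
  size ps = m -> size qs = m ->
  (forall i j, (i < m)%N -> (j < m)%N -> ((nth 0 ps i) *m (nth 0 qs j)^T) 0 0 = (i == j)%:R) ->
  hodge (wedge_seq (take k ps)) = sc (\det (mxn m ps)) (wedge_seq (drop k qs)).
Proof.
move=> sp sq dual; subst m.
have stk : size (take k ps) = k by rewrite size_takel // sp leq_addr.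
have sdq : size (drop k qs) = l by rewrite size_drop sq addKn.
apply/ffunP => S; rewrite [RHS]ffunE.
case: (eqVneq #|S| l) => hS; last first.
  rewrite hodgeE -(wedge_rows_mxn stk) -(wedge_rows_mxn sdq) !MF.
  rewrite (negbTE hS) mulr0 (_ : (#|~: S| == k) = false) ?mulr0 //.
  apply/negbTE; apply: contra hS => /eqP h.
  by move: (cardsC S); rewrite h card_ord => /eqP; rewrite addnC eqn_add2l.
rewrite ffunE /omega pairing_basisr -basis_seq -wedge_seq_cat.
have ses : size (erows S) = l by rewrite size_erows.
rewrite -(wedge_rows_mxn (n := k + l)); last by rewrite size_cat stk ses.
rewrite top_det mxn_cat //.
rewrite -(wedge_rows_mxn sdq) MF hS eqxx.
set Pm := mxn (k + l) ps; set Qm := mxn (k + l) qs.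
set U := mxn k _; set E := mxn l _.
have PQ : Pm *m Qm^T = 1%:M.
  apply/matrixP => i j; rewrite !mxE -(dual i j) ?ltn_ord // mxE.
  by apply: eq_bigr => x _; rewrite !mxE.
have dPQ : \det Pm * \det Qm = 1 by rewrite -[\det Qm]det_tr -det_mulmx PQ det1.

set Q1 := lsubmx Qm^T; set Q2 := rsubmx Qm^T.
have UQ1 : U *m Q1 = 1%:M.
  apply/matrixP => i j; have := congr1 (fun M : 'M[rat]_(k + l) => M (lshift l i) (lshift l j)) PQ.
  rewrite !mxE /= => <-; apply: eq_bigr => x _; rewrite !mxE /=.
  by rewrite nth_take ?ltn_ord.
have UQ2 : U *m Q2 = 0.
  apply/matrixP => i j; have := congr1 (fun M : 'M[rat]_(k + l) => M (lshift l i) (rshift k j)) PQ.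
  rewrite !mxE /= => h.
  have e : (lshift l i == rshift k j) = false.
    by apply/negbTE; rewrite -val_eqE /= neq_ltn ltn_addr.
  rewrite e in h; transitivity (false%:R : rat); last by [].
  rewrite -h; apply: eq_bigr => x _; rewrite /U /Q2 /Pm !mxE /=.
  by rewrite nth_take ?ltn_ord.
have key : \det (col_mx U E) * \det Qm = \det (E *m Q2).
  rewrite -[\det Qm]det_tr -[Qm^T]hsubmxK -/Q1 -/Q2 -det_mulmx mul_col_row UQ1 UQ2 det_lblock det1 mul1r.
  done.
have -> : sub (mxn l (drop k qs)) S = (E *m Q2)^T.
  apply/matrixP => i j; rewrite !mxE.
  rewrite big_mkcond /=; apply: eq_bigr => x _.
  rewrite /E /Q2 !mxE nth_erows ?hS // nth_drop /=.
  by case: (x \in S); case: (rk S x == j); rewrite ?mul1r ?mul0r.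
by rewrite det_tr -key mulrCA dPQ mulr1.
Qed.


Section E.
Variable m : nat.

Definition Dual (ps qs : seq 'rV[rat]_m) := forall i j, (i < m)%N -> (j < m)%N ->
  ((nth 0 ps i) *m (nth 0 qs j)^T) 0 0 = (i == j)%:R.

Lemma dual_of_mx (s t : seq 'rV[rat]_m) : mxn m s *m (mxn m t)^T = 1%:M -> Dual s t.
Proof.
move=> h i j hi hj.
have := congr1 (fun M : 'M[rat]_m => M (Ordinal hi) (Ordinal hj)) h.
rewrite !mxE /= => <-; apply: eq_bigr => x _; by rewrite !mxE.
Qed.

Definition rows_of n (M : 'M[rat]_(n, m)) := [seq row i M | i <- enum 'I_n].

Lemma size_rows_of n (M : 'M[rat]_(n, m)) : size (rows_of M) = n.
Proof. by rewrite size_map size_enum_ord. Qed.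

Lemma mxn_rows n (M : 'M[rat]_(n, m)) : mxn n (rows_of M) = M.
Proof.
apply/matrixP => i x; rewrite mxE (nth_map i) ?size_enum_ord // nth_ord_enum.
by rewrite mxE.
Qed.

Lemma nth_rot (T : Type) (x0 : T) (s : seq T) b i : size s = m -> (b <= m)%N -> (i < m)%N ->
  nth x0 (drop b s ++ take b s) i = nth x0 s (if (i < m - b)%N then (b + i)%N else (i - (m - b))%N).
Proof.
move=> hs hb hi; rewrite nth_cat size_drop hs.
case: ifP => h; first by rewrite nth_drop.
rewrite nth_take //; lia.
Qed.

Lemma Dual_rot ps qs b : size ps = m -> size qs = m -> (b <= m)%N -> Dual ps qs ->
  Dual (drop b ps ++ take b ps) (drop b qs ++ take b qs).
Proof.
move=> sp sq hb d i j hi hj; rewrite !nth_rot // d.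
- by congr ((nat_of_bool _)%:R); case: ifP => h1; case: ifP => h2; apply/idP/idP => /eqP h; apply/eqP; lia.
- by case: ifP => h; lia.
- by case: ifP => h; lia.
Qed.

Definition segf (fv : nat -> 'rV[rat]_m) x y := [seq fv i | i <- iota x.+1 y].
Definition hsegf (hv : nat -> 'rV[rat]_m) x y := rev [seq hv i | i <- iota x.+1 y].

Lemma size_segf fv x y : size (segf fv x y) = y.
Proof. by rewrite size_map size_iota. Qed.

Lemma size_hsegf fv x y : size (hsegf fv x y) = y.
Proof. by rewrite size_rev size_map size_iota. Qed.

Lemma segD fv x y z : segf fv x (y + z) = segf fv x y ++ segf fv (x + y) z.
Proof. by rewrite /segf iotaD map_cat addSn. Qed.

Lemma hsegD fv x y z : hsegf fv x (y + z) = hsegf fv (x + y) z ++ hsegf fv x y.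
Proof. by rewrite /hsegf iotaD map_cat rev_cat addSn. Qed.

Lemma mxn_sub n (s : seq 'rV[rat]_m) p (B : 'M[rat]_(p, m)) :
  (forall v, v \in s -> (v <= B)%MS) -> (mxn n s <= B)%MS.
Proof.
move=> h; apply/row_subP => i.
have -> : row i (mxn n s) = nth 0 s i by apply/rowP => j; rewrite !mxE.
case: (ltnP i (size s)) => hi; first by apply: h; rewrite mem_nth.
by rewrite nth_default // sub0mx.
Qed.

Lemma flag_mono (G : forall k : nat, 'M[rat]_(k, m)) : decorated_flag G ->
  forall j j', (j <= j')%N -> (j' <= m)%N -> (G j <= G j')%MS.
Proof.
case=> _ hG _ j j' hjj'; elim: j' hjj' => [|j' IH].
  by rewrite leqn0 => /eqP ->.
rewrite leq_eqVlt => /orP[/eqP -> _|]; first exact: submx_refl.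
rewrite ltnS => hj hj'; apply: submx_trans (IH hj (ltnW hj')) (hG _ hj').
Qed.

End E.


Theorem lemma6p25p15 (m : nat) (F G H : forall k : nat, 'M[rat]_(k, m))
    (fv hv : nat -> 'rV[rat]_m) :
  decorated_flag F -> decorated_flag G -> decorated_flag H ->
  generic_triple F G H ->
  FG_basis F G fv -> GH_basis G H hv ->
  forall a b c : nat, (a + b + c)%N = m ->
    (a, b, c) \notin [:: (m, 0, 0); (0, m, 0); (0, 0, m)]%N ->
    Delta_star F G H a b c = Delta_s F G H fv hv b c 0 a.
Proof.
move=> hF hG hH _ hFG hGH a b c habc _.
have decF k : (k <= m)%N -> dec F k = wedge_seq (segf fv 0 k).
  case: k => [_|k hk]; first by rewrite /dec wedge_rows0.
  by have [_ _ ->] := hFG k.+1 hk.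
have decH k : (k <= m)%N -> dec H k = wedge_seq (hsegf hv 0 k).
  case: k => [_|k hk]; first by rewrite /dec wedge_rows0.
  by have [_ _ ->] := hGH k.+1 hk.
have decG0 : dec G 0 = mv1 m by rewrite /dec wedge_rows0.
have topF : wedge_seq (segf fv 0 m) setT = 1.
  by case: hF => _ _; rewrite /omega pairing_basisr -/(dec F m) decF.
set fs := segf fv 0 m.
have sfs : size fs = m by rewrite size_segf.
set P := mxn m fs.
have dP : \det P = 1 by rewrite -top_det wedge_rows_mxn.
have Pu : P \in unitmx by rewrite unitmxE dP unitr1.
set qs := rows_of (invmx P)^T.
have sqs : size qs = m by rewrite size_rows_of.
have dual : Dual fs qs.
  by apply: dual_of_mx; rewrite mxn_rows trmxK mulmxV.
have nth_segf x y i : (i < y)%N -> nth 0 (segf fv x y) i = fv (x + i).+1.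
  by move=> hi; rewrite /segf (nth_map 0%N) ?size_iota // nth_iota.
have efs : fs = segf fv 0 b ++ segf fv b (c + a).
  by rewrite /fs -segD; congr (segf _ _ _); lia.
set ps2 := segf fv b (c + a) ++ segf fv 0 b.
set qs2 := drop b qs ++ take b qs.
have sps2 : size ps2 = m by rewrite size_cat !size_segf; lia.
have sqs2 : size qs2 = m by rewrite size_cat size_drop size_takel sqs; lia.
have dual2 : Dual ps2 qs2.
  have -> : ps2 = drop b fs ++ take b fs.
    by rewrite efs drop_size_cat ?size_segf // take_size_cat ?size_segf.
  by apply: Dual_rot => //; lia.
have HL1 : hodge (dec F (b + c)) = sc (\det P) (wedge_seq (drop (b + c) qs)).
  rewrite decF; last lia.
  rewrite -(@HL m (b + c) a _ fs qs) //; last lia.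
  congr (hodge (wedge_seq _)).
  have -> : fs = segf fv 0 ((b + c) + a) by rewrite /fs; congr (segf _ _ _); lia.
  by rewrite [segf fv 0 (b + c + a)]segD take_size_cat ?size_segf.
have HL2 : hodge (wedge_seq (segf fv b (c + a))) = sc (\det (mxn m ps2)) (wedge_seq (take b qs)).
  have e : (c + a + b)%N = m by lia.
  have := @HL m (c + a) b e ps2 qs2 sps2 sqs2 dual2.
  rewrite /ps2 take_size_cat ?size_segf // /qs2 drop_size_cat // size_drop sqs; lia.
have HL3 : hodge (wedge_seq (segf fv b c)) = sc (\det (mxn m ps2)) (wedge_seq (drop (b + c) qs ++ take b qs)).
  have e : (c + (a + b))%N = m by lia.
  have := @HL m c (a + b) e ps2 qs2 sps2 sqs2 dual2.
  have -> : take c ps2 = segf fv b c.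
    by rewrite /ps2 segD -catA take_size_cat ?size_segf.
  have -> : drop c qs2 = drop (b + c) qs ++ take b qs.
    rewrite /qs2 drop_cat size_drop sqs; case: ltnP => h.
      by rewrite drop_drop addnC.
    have e2 : c = (m - b)%N by lia.
    by rewrite e2 subnn drop0 drop_oversize // sqs; lia.
  done.
have claim : wedge (hodge (dec F (b + c))) (hodge (wedge_seq (segf fv b (c + a)))) =
             hodge (wedge_seq (segf fv b c)).
  by rewrite HL1 HL2 HL3 wedgeZl wedgeZr scA dP mul1r wedge_seq_cat.
have hfG i : (b < i)%N -> (i <= m)%N -> (fv i <= G (c + a)%N)%MS.
  move=> h1 h2; have hi : (1 <= i <= m)%N by apply/andP; split; lia.
  have [_ s2 _] := hFG i hi.
  by apply: submx_trans s2 (flag_mono hG _ _); lia.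
have hhG i : (b < i)%N -> (i <= m)%N -> (hv i <= G (c + a)%N)%MS.
  move=> h1 h2; have hi : (1 <= i <= m)%N by apply/andP; split; lia.
  have [s2 _ _] := hGH i hi.
  by apply: submx_trans s2 (flag_mono hG _ _); lia.
set w := wedge_seq (segf fv b (c + a)).
set W := mxn (c + a) (segf fv b (c + a)).
have WG : (W <= G (c + a)%N)%MS.
  by apply: mxn_sub => v /mapP[i hi ->]; move: hi; rewrite mem_iota => /andP[h1 h2]; apply: hfG; lia.
have WQ : W *m (mxn (c + a) (drop b qs))^T = 1%:M.
  apply/matrixP => i j.
  have := dual (b + i)%N (b + j)%N; rewrite efs nth_cat size_segf.
  rewrite (_ : (b + i < b)%N = false); last lia.
  rewrite addKn eqn_add2l => h; rewrite [RHS]mxE -h; last 2 first.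
  - by have := ltn_ord i; lia.
  - by have := ltn_ord j; lia.
  rewrite !mxE; apply: eq_bigr => x _; rewrite !mxE nth_drop.
  done.
have rW : \rank W = (c + a)%N.
  apply/eqP; rewrite eqn_leq rank_leq_row /=.
  by have := mxrankM_maxl W (mxn (c + a) (drop b qs))^T; rewrite WQ mxrank1.
have GW : (G (c + a)%N <= W)%MS.
  case: (mxrank_leqif_sup WG) => h <-; apply/eqP.
  have := rank_leq_row (G (c + a)%N); lia.
have [Dg eDg] := submxP GW.
have eg : dec G (c + a) = sc (\det Dg) w.
  by rewrite /dec eDg ML wedge_rows_mxn ?size_segf.
set ys := segf fv b c ++ hsegf hv b a.
have YW : (mxn (c + a) ys <= W)%MS.
  apply: submx_trans GW; apply: mxn_sub => v; rewrite mem_cat => /orP[].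
    by move=> /mapP[i hi ->]; move: hi; rewrite mem_iota => /andP[h1 h2]; apply: hfG; lia.
  by rewrite mem_rev => /mapP[i hi ->]; move: hi; rewrite mem_iota => /andP[h1 h2]; apply: hhG; lia.
have [Dy eDy] := submxP YW.
have eY : wedge_seq ys = sc (\det Dy) w.
  by rewrite -(@wedge_rows_mxn _ (c + a)) ?size_cat ?size_segf ?size_hsegf // eDy ML wedge_rows_mxn ?size_segf.
have scE (k : rat) (u : mv m) S : sc k u S = k * u S by rewrite ffunE.
have dFb : dec F b = wedge_seq (segf fv 0 b) by apply: decF; lia.
have dHb : dec H b = wedge_seq (hsegf hv 0 b) by apply: decH; lia.
have dHab : dec H (a + b) = wedge_seq (hsegf hv b a ++ hsegf hv 0 b).
  rewrite decH; last lia.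
  by rewrite addnC hsegD.
have top1 : wedge (wedge_seq (segf fv 0 b)) w setT = 1.
  by rewrite /w -wedge_seq_cat -efs.
set T2 := wedge w (wedge_seq (hsegf hv 0 b)) setT.
have LHS : Delta_star F G H a b c = \det Dg * (\det Dy * T2).
  rewrite /Delta_star /omega_star pairing_basisl.
  rewrite (_ : (m - a)%N = (b + c)%N); last lia.
  rewrite (_ : (m - b)%N = (c + a)%N); last lia.
  rewrite (_ : (m - c)%N = (a + b)%N); last lia.
  rewrite eg hodgeZ wedgeZl wedgeZr scE -wedgeA claim top_wedge_hodge pairing_hodge dHab.
  by rewrite wedge_seq_cat -wedgeA -wedge_seq_cat eY wedgeZl scE.
rewrite LHS /Delta_s /vol_eval.
rewrite (_ : (m - b)%N = (c + a)%N); last lia.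
rewrite eg dFb dHb decG0 wedge1v /omega !pairing_basisr.
change (f_s fv b c) with (wedge_seq (segf fv b c)).
change (h_s hv b a) with (wedge_seq (hsegf hv b a)).
rewrite -wedge_seq_cat -/ys eY wedgeZr wedgeZl !scE top1 -/T2.
under eq_bigr => S _ do rewrite !scE.
set Q := \sum_S w S ^+ 2.
have eQ1 : \sum_S \det Dy * w S * (\det Dg * w S) = \det Dy * \det Dg * Q.
  rewrite /Q big_distrr /=; apply: eq_bigr => S _; ring.
have eQ2 : \sum_S (sc (\det Dg) w S) ^+ 2 = \det Dg ^+ 2 * Q.
  rewrite /Q big_distrr /=; apply: eq_bigr => S _; rewrite scE; ring.
rewrite eQ2 -big_distrl /= eQ1.
have Q0 : Q != 0.
  apply/negP => /eqP hQ.
  have w0 : w = [ffun _ => 0].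
    apply/ffunP => S; rewrite ffunE.
    have h2 : w S ^+ 2 = 0.
      by apply: (psumr_eq0P (P := predT) (F := fun S => w S ^+ 2) _ hQ) => // T _; rewrite sqr_ge0.
    by apply/eqP; rewrite -sqrf_eq0 h2.
  move: top1; rewrite w0 wedgeE big1 ?oner_eq0 // => A _; by rewrite ffunE mulr0.
case: (eqVneq (\det Dg) 0) => [->|hD]; first by rewrite !mul0r.
field.
by rewrite Q0 hD.
Qed.
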